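(* Let $\{(\iota_1,z_1^* ),\dots,(\iota_J,z_J^* )\}$ be minimally degenerate. Then: (1) $\ker A^*$ is one-dimensional and there is a unique $\vec{\mathfrak c}\in(0,\infty)^J$ with $|\vec{\mathfrak c}|=1$ and $\ker A^*=\mathbb{R}\vec{\mathfrak c}$; (2) $\big|\frac{\vec\ell}{|\vec\ell|}-\vec{\mathfrak c}\big|\simeq\frac{|A^*\vec\ell|}{|\vec\ell|}$ for every $0\ne\vec\ell\in[0,\infty)^J$; (3) for any $\delta_1>0$ and $\vec\lambda\in(0,\infty)^J$ with $\lambda_{\mathrm{max2}}\ge\delta_1\lambda_{\max}$, $\sum_{i=1}^J\lambda_i^{2D-2}(A^*\vec\lambda^D)_i^2\simeq_{\delta_1}\lambda_{\max}^{2D-2}|A^*\vec\lambda^D|^2$.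
   Context: $N\ge7$, $D=\frac{N-2}2$; $\iota_i\in\{\pm1\}$ and distinct $z_i^*\in\mathbb{R}^N$. $A^*_{ij}=\mathbf 1_{i\ne j}\kappa_0\kappa_\infty\frac{\iota_i\iota_j}{|z_i^*-z_j^*|^{N-2}}$ with fixed positive constants $\kappa_0,\kappa_\infty$. A configuration is degenerate if $A^*$ has a nonzero kernel element in $[0,\infty)^J$; minimally degenerate if it is degenerate while every proper sub-configuration of size $\ge2$ (using the corresponding submatrix) is non-degenerate. $\vec\lambda^D=(\lambda_i^D)_i$; $\lambda_{\max}$, $\lambda_{\mathrm{max2}}$ largest and second largest $\lambda_i$. Implicit constants depend on the configuration (and $\delta_1$ where indicated). *)

(* Defs.v *)
From HB Require Import structures.
From mathcomp Require Import all_boot all_order all_algebra.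
From mathcomp Require Import reals exp.
Set Implicit Arguments. Unset Strict Implicit. Unset Printing Implicit Defensive.
Import Order.TTheory GRing.Theory Num.Theory.
Local Open Scope ring_scope.

Definition enorm (R : realType) (m n : nat) (M : 'M[R]_(m, n)) : R :=
  Num.sqrt (\sum_(i < m) \sum_(j < n) M i j ^+ 2).

Definition Dexp (R : realType) (N : nat) : R := (N%:R - 2) / 2.

Definition Astar (R : realType) (N J : nat) (k0 kinf : R)
  (iota : 'I_J -> R) (z : 'I_J -> 'rV[R]_N) : 'M[R]_J :=
  \matrix_(i, j) (if i == j then 0
     else k0 * kinf * iota i * iota j / (enorm (z i - z j)) ^+ (N - 2)).

Definition degenerate_mx (R : realType) (n : nat) (M : 'M[R]_n) : Prop :=
  exists v : 'cV[R]_n, v != 0 /\ (forall i, 0 <= v i 0) /\ M *m v = 0.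

Definition subcfg_mx (R : realType) (n : nat) (M : 'M[R]_n) (S : {set 'I_n})
  : 'M[R]_#|S| :=
  \matrix_(a, b) M (@enum_val _ (mem S) a) (@enum_val _ (mem S) b).

Definition minimally_degenerate (R : realType) (n : nat) (M : 'M[R]_n) : Prop :=
  degenerate_mx M /\
  forall S : {set 'I_n}, (2 <= #|S|)%N -> (#|S| < n)%N ->
    ~ degenerate_mx (subcfg_mx M S).

(* largest and second largest entries (with multiplicity) *)
Definition lmax (R : realType) (n : nat) (l : 'cV[R]_n) : R :=
  \big[Num.max/0]_(i < n) l i 0.
Definition lmax2 (R : realType) (n : nat) (l : 'cV[R]_n) : R :=
  nth 0 (sort (fun x y : R => y <= x) [seq l i 0 | i <- enum 'I_n]) 1.

Definition vpow (R : realType) (n : nat) (l : 'cV[R]_n) (p : R) : 'cV[R]_n :=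
  \col_i powR (l i 0) p.

(* Main.v *)
Require Import Defs.
From HB Require Import structures.
From mathcomp Require Import all_boot all_order all_algebra.
From mathcomp Require Import reals exp.
From mathcomp Require Import boolp lra ring.
Import Order.TTheory GRing.Theory Num.Theory.
Local Open Scope ring_scope.


Definition n1 {R : realType} {n : nat} (v : 'cV[R]_n) : R := \sum_i `|v i 0|.
Definition Kmx {R : realType} {m n : nat} (M : 'M[R]_(m, n)) : R :=
  \sum_i \sum_j `|M i j|.
Definition mskv {R : realType} {n : nat} (S : {set 'I_n}) (v : 'cV[R]_n) : 'cV[R]_n :=
  \col_i (if i \in S then v i 0 else 0).
Definition Pm {R : realType} {n : nat} (S : {set 'I_n}) : 'M[R]_n :=
  \matrix_(i, j) (if (i == j) && (i \in S) then 1 else 0).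

Lemma enormE {R : realType} {n : nat} (v : 'cV[R]_n) :
  enorm v = Num.sqrt (\sum_i v i 0 ^+ 2).
Proof. by rewrite /enorm; apply: congr1; apply: eq_bigr => i _; rewrite big_ord1. Qed.

Lemma enorm_sq {R : realType} {n : nat} (v : 'cV[R]_n) :
  enorm v ^+ 2 = \sum_i v i 0 ^+ 2.
Proof. by rewrite enormE sqr_sqrtr // sumr_ge0 // => i _; rewrite sqr_ge0. Qed.

Lemma enorm_ge0 {R : realType} {m n : nat} (M : 'M[R]_(m, n)) : 0 <= enorm M.
Proof. exact: sqrtr_ge0. Qed.

Lemma le_sum_nonneg {R : realType} {n : nat} (F : 'I_n -> R) i :
  (forall j, 0 <= F j) -> F i <= \sum_j F j.
Proof.
move=> F0; rewrite (bigD1 i) //= lerDl sumr_ge0 // => j _; exact: F0.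
Qed.

Lemma abs_le_enorm {R : realType} {n : nat} (v : 'cV[R]_n) i : `|v i 0| <= enorm v.
Proof.
rewrite enormE -sqrtr_sqr ler_sqrt; last by rewrite sumr_ge0 // => j _; rewrite sqr_ge0.
apply: (@le_sum_nonneg R n (fun j => v j 0 ^+ 2) i) => j; exact: sqr_ge0.
Qed.

Lemma n1_ge0 {R : realType} {n : nat} (v : 'cV[R]_n) : 0 <= n1 v.
Proof. by rewrite sumr_ge0. Qed.

Lemma n1_le_enorm {R : realType} {n : nat} (v : 'cV[R]_n) : n1 v <= n%:R * enorm v.
Proof.
rewrite /n1 (@le_trans _ _ (\sum_(i < n) enorm v)) //.
  by apply: ler_sum => i _; exact: abs_le_enorm.
by rewrite sumr_const card_ord mulr_natl.
Qed.

Lemma enorm_le_n1 {R : realType} {n : nat} (v : 'cV[R]_n) : enorm v <= n1 v.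
Proof.
rewrite enormE -(ger0_norm (n1_ge0 v)) -sqrtr_sqr ler_sqrt; last exact: sqr_ge0.
rewrite expr2 mulr_suml; apply: ler_sum => i _.
rewrite -[v i 0 ^+ 2]ger0_norm ?sqr_ge0 // normrX expr2.
apply: ler_wpM2l => //; rewrite /n1; apply: (le_sum_nonneg (fun j => `|v j 0|)) => j //.
Qed.

Lemma enormZ {R : realType} {n : nat} (a : R) (v : 'cV[R]_n) : enorm (a *: v) = `|a| * enorm v.
Proof.
rewrite !enormE -sqrtr_sqr -sqrtrM ?sqr_ge0 //; congr Num.sqrt.
by rewrite mulr_sumr; apply: eq_bigr => i _; rewrite mxE exprMn.
Qed.

Lemma n1D {R : realType} {n : nat} (u v : 'cV[R]_n) : n1 (u + v) <= n1 u + n1 v.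
Proof.
rewrite /n1 -big_split /=; apply: ler_sum => i _; rewrite mxE; exact: ler_normD.
Qed.

Lemma n1N {R : realType} {n : nat} (v : 'cV[R]_n) : n1 (- v) = n1 v.
Proof. by apply: eq_bigr => i _; rewrite mxE normrN. Qed.

Lemma n1B {R : realType} {n : nat} (u v : 'cV[R]_n) : n1 (u - v) <= n1 u + n1 v.
Proof. by rewrite -(n1N v) n1D. Qed.

Lemma n1Z {R : realType} {n : nat} (a : R) (v : 'cV[R]_n) : n1 (a *: v) = `|a| * n1 v.
Proof. by rewrite /n1 mulr_sumr; apply: eq_bigr => i _; rewrite mxE normrM. Qed.

Lemma Kmx_ge0 {R : realType} {m n : nat} (M : 'M[R]_(m, n)) : 0 <= Kmx M.
Proof. by rewrite sumr_ge0 // => i _; rewrite sumr_ge0. Qed.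

Lemma n1_mul {R : realType} {m n : nat} (M : 'M[R]_(m, n)) (v : 'cV[R]_n) :
  n1 (M *m v) <= Kmx M * n1 v.
Proof.
rewrite /n1 /Kmx mulr_suml; apply: ler_sum => i _; rewrite mxE.
apply: (le_trans (ler_norm_sum _ _ _)); rewrite mulr_suml; apply: ler_sum => j _.
rewrite normrM; apply: ler_wpM2l => //.
by apply: (le_sum_nonneg (fun k => `|v k 0|)).
Qed.

Lemma enorm_gt0 {R : realType} {m n : nat} (M : 'M[R]_(m, n)) : M != 0 -> 0 < enorm M.
Proof.
move=> M0; have [i [j Mij]] : exists i j, M i j != 0.
  apply: contrapT => H; move/eqP: M0; apply; apply/matrixP => i j; rewrite mxE.
  by apply/eqP; apply: contrapT => /negP ?; apply: H; exists i, j.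
rewrite /enorm sqrtr_gt0; apply: (@lt_le_trans _ _ (\sum_j M i j ^+ 2)).
  apply: (@lt_le_trans _ _ (M i j ^+ 2)); first by rewrite exprn_even_gt0.
  by apply: (le_sum_nonneg (fun k => M i k ^+ 2)) => k; rewrite sqr_ge0.
by apply: (le_sum_nonneg (fun k => \sum_j M k j ^+ 2)) => k; rewrite sumr_ge0 // => *; rewrite sqr_ge0.
Qed.


Lemma dist_ker {R : realType} {m n : nat} (M : 'M[R]_(m, n)) :
  exists C, 0 <= C /\ forall u : 'cV[R]_n,
    exists k, M *m k = 0 /\ n1 (u - k) <= C * n1 (M *m u).
Proof.
set P := pinvmx M^T.
exists (Kmx P^T); split; first exact: Kmx_ge0.
move=> u; set x' := u^T *m M^T *m P.
have hx : x' *m M^T = u^T *m M^T by rewrite /x' mulmxKpV // submxMl.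
have e1 : M *m x'^T = M *m u.
  by rewrite -[M in LHS]trmxK -trmx_mul hx trmx_mul !trmxK.
exists (u - x'^T); split; first by rewrite mulmxBr e1 subrr.
have -> : u - (u - x'^T) = x'^T by rewrite opprB addrC subrK.
have -> : x'^T = P^T *m (M *m u) by rewrite /x' !trmx_mul !trmxK mulmxA.
exact: n1_mul.
Qed.


Definition supp {R : realType} {n : nat} (u : 'cV[R]_n) (S : {set 'I_n}) :=
  forall i, i \notin S -> u i 0 = 0.
Definition nneg {R : realType} {n : nat} (u : 'cV[R]_n) := forall i, 0 <= u i 0.

Lemma Pm_mul {R : realType} {n : nat} (S : {set 'I_n}) (v : 'cV[R]_n) :
  Pm S *m v = mskv S v.
Proof.
apply/matrixP => i j; rewrite !mxE (ord1 j) (bigD1 i) //= big1 ?addr0.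
  by rewrite !mxE eqxx /=; case: (i \in S); rewrite ?mul1r ?mul0r.
by move=> k /negPf ki; rewrite mxE eq_sym ki /= mul0r.
Qed.

Lemma mskv_id {R : realType} {n : nat} (S : {set 'I_n}) (u : 'cV[R]_n) :
  supp u S -> mskv S u = u.
Proof.
move=> su; apply/matrixP => i j; rewrite !mxE (ord1 j).
by case: ifP => // /negbT /su ->.
Qed.

Lemma mskv_supp {R : realType} {n : nat} (S : {set 'I_n}) (u : 'cV[R]_n) :
  supp (mskv S u) S.
Proof. by move=> i /negPf iS; rewrite mxE iS. Qed.

Lemma mskvB {R : realType} {n : nat} (S : {set 'I_n}) (u v : 'cV[R]_n) :
  mskv S (u - v) = mskv S u - mskv S v.
Proof.
by apply/matrixP => i j; rewrite !mxE; case: ifP => _; rewrite ?subr0.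
Qed.

Lemma n1_mskv {R : realType} {n : nat} (S : {set 'I_n}) (u : 'cV[R]_n) :
  n1 (mskv S u) <= n1 u.
Proof.
by apply: ler_sum => i _; rewrite mxE; case: ifP => _; rewrite ?normr0.
Qed.

Lemma n1_nneg {R : realType} {n : nat} (u : 'cV[R]_n) :
  nneg u -> n1 u = \sum_i u i 0.
Proof. by move=> h; apply: eq_bigr => i _; rewrite ger0_norm. Qed.

Lemma caseB {R : realType} {m n : nat} (M : 'M[R]_(m, n)) (S : {set 'I_n}) :
  (forall w, supp w S -> M *m w = 0 -> w = 0) ->
  exists C, 0 <= C /\ forall u, supp u S -> n1 u <= C * n1 (M *m u).
Proof.
move=> hS; have [C [C0 HC]] := dist_ker (M *m Pm S).
exists C; split => // u su.
have [k [k0 hk]] := HC u.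
have e1 : M *m Pm S *m u = M *m u by rewrite -mulmxA Pm_mul mskv_id.
rewrite e1 in hk.
have mk0 : mskv S k = 0.
  by apply: hS; [exact: mskv_supp | rewrite -Pm_mul mulmxA].
have -> : n1 u = n1 (mskv S (u - k)) by rewrite mskvB mk0 subr0 mskv_id.
apply: le_trans hk; exact: n1_mskv.
Qed.

Lemma gordan_step {R : realType} {m n : nat} (M : 'M[R]_(m, n)) (S : {set 'I_n}) :
  (forall w, nneg w -> supp w S -> M *m w = 0 -> w = 0) ->
  (forall j, j \in S -> exists C, 0 <= C /\ forall u, nneg u -> supp u (S :\ j) ->
       n1 u <= C * n1 (M *m u)) ->
  exists C, 0 <= C /\ forall u, nneg u -> supp u S -> n1 u <= C * n1 (M *m u).
Proof.
move=> hS IH.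
case: (pselect (exists w, supp w S /\ M *m w = 0 /\ w != 0)); last first.
  move=> nw; have hB : forall w, supp w S -> M *m w = 0 -> w = 0.
    move=> w sw Mw; apply/eqP; apply: contrapT => /negP wn; apply: nw.
    by exists w.
  have [C [C0 HC]] := caseB M S hB.
  by exists C; split => // u _ /HC.
move=> [w0 [sw0 [Mw0 w00]]].
pose w := if 0 <= \sum_i w0 i 0 then w0 else - w0.
have sw : supp w S by move=> i iS; rewrite /w; case: ifP => _; rewrite ?mxE sw0 ?oppr0.
have Mw : M *m w = 0 by rewrite /w; case: ifP => _; rewrite ?mulmxN Mw0 ?oppr0.
have w0' : w != 0 by rewrite /w; case: ifP => _ //; rewrite oppr_eq0.
have sumw : 0 <= \sum_i w i 0.
  rewrite /w; case: ifP => // /negbT; rewrite -ltNge => h.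
  under eq_bigr do rewrite mxE.
  by rewrite sumrN oppr_ge0 ltW.
have [j1 wj1] : exists j, w j 0 < 0.
  apply: contrapT => nj; move/eqP: w0'; apply; apply: hS => // i.
  by rewrite leNgt; apply/negP => h; apply: nj; exists i.
have hex : forall j, exists C, 0 <= C /\ (j \in S -> forall u, nneg u ->
    supp u (S :\ j) -> n1 u <= C * n1 (M *m u)).
  move=> j; case: (boolP (j \in S)) => jS.
    by have [C [C0 HC]] := IH j jS; exists C; split.
  by exists 0; split.
have [f Hf] := choice hex.
exists (\sum_j f j); split; first by rewrite sumr_ge0 // => j _; case: (Hf j).
move=> u un su.
case: (@arg_minP _ _ _ j1 (fun j => w j 0 < 0) (fun j => u j 0 / - w j 0) wj1).
move=> j0 wj0 Hmin.
set t := u j0 0 / - w j0 0.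
have t0 : 0 <= t by rewrite divr_ge0 // oppr_ge0 ltW.
pose u' := u + t *: w.
have un' : nneg u'.
  move=> i; rewrite !mxE; case: (leP 0 (w i 0)) => wi.
    by rewrite addr_ge0 // mulr_ge0.
  have := Hmin i wi; rewrite -/t ler_pdivlMr ?oppr_gt0 // mulrN => h.
  lra.
have j0S : j0 \in S by apply: contraT => /sw h; move: wj0; rewrite h ltxx.
have su' : supp u' (S :\ j0).
  move=> i; rewrite !mxE in_setD1 negb_and negbK; case/orP.
    move/eqP => ->; rewrite /t invrN mulrN mulNr -mulrA mulVf ?mulr1 ?subrr //.
    by rewrite lt_eqF.
  by move=> iS; rewrite su // sw // mulr0 addr0.
have Mu' : M *m u' = M *m u by rewrite mulmxDr -scalemxAr Mw scaler0 addr0.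
have h1 : n1 u <= n1 u'.
  rewrite !n1_nneg // /u'; under [X in _ <= X]eq_bigr do rewrite !mxE.
  by rewrite big_split /= -mulr_sumr lerDl mulr_ge0.
apply: (le_trans h1); have [f0 Hf0] := Hf j0.
apply: (le_trans (Hf0 j0S u' un' su')); rewrite Mu'; apply: ler_wpM2r; first exact: n1_ge0.
by apply: (le_sum_nonneg f) => j; case: (Hf j).
Qed.

Lemma gordan {R : realType} {m n : nat} (M : 'M[R]_(m, n)) k (S : {set 'I_n}) :
  (#|S| <= k)%N ->
  (forall w, nneg w -> supp w S -> M *m w = 0 -> w = 0) ->
  exists C, 0 <= C /\ forall u, nneg u -> supp u S -> n1 u <= C * n1 (M *m u).
Proof.
elim: k S => [|k IHk] S cS hS; apply: gordan_step => // j jS.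
  by move: cS; rewrite leqn0 => /eqP/cards0_eq S0; rewrite S0 inE in jS.
apply: IHk.
  by rewrite -ltnS (leq_trans _ cS) // (cardsD1 j S) jS.
by move=> w wn sw; apply: hS => // i iS; apply: sw; rewrite in_setD1 negb_and iS orbT.
Qed.


Lemma nz_entry {R : realType} {m n : nat} (M : 'M[R]_(m, n)) :
  M != 0 -> exists i j, M i j != 0.
Proof.
move=> M0; apply: contrapT => H; move/eqP: M0; apply; apply/matrixP => i j; rewrite mxE.
by apply/eqP; apply: contrapT => /negP ?; apply: H; exists i, j.
Qed.

Lemma sub_degen {R : realType} {n : nat} (A : 'M[R]_n) (S : {set 'I_n}) (v : 'cV[R]_n) :
  nneg v -> v != 0 -> supp v S -> (forall i, i \in S -> (A *m v) i 0 = 0) ->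
  degenerate_mx (subcfg_mx A S).
Proof.
move=> vn v0 sv Av.
exists (\col_a v (@enum_val _ (mem S) a) 0); split; last split.
- have [i [j vij]] := nz_entry _ v0; rewrite (ord1 j) in vij.
  have iS : i \in S by apply: contraT => /sv h; move: vij; rewrite h eqxx.
  apply/eqP => /matrixP /(_ (enum_rank_in iS i) 0); rewrite !mxE enum_rankK_in //.
  by move/eqP; rewrite (negbTE vij).
- by move=> a; rewrite mxE.
- apply/matrixP => a j; rewrite (ord1 j) !mxE.
  under eq_bigr do rewrite !mxE.
  rewrite -(big_enum_val (fun x => A (enum_val a) x * v x 0)) /=.
  rewrite big_mkcond /= -[RHS](Av (enum_val a) (enum_valP a)) mxE; apply: eq_bigr => x _.
  by case: ifP => // /negbT /sv ->; rewrite mulr0.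
Qed.


Definition offdiag {R : realType} {n : nat} (A : 'M[R]_n) :=
  forall i j, i != j -> A i j != 0.

Lemma KL {R : realType} {n : nat} (A : 'M[R]_n) :
  minimally_degenerate A -> offdiag A ->
  forall v, nneg v -> v != 0 -> A *m v = 0 -> forall i, 0 < v i 0.
Proof.
move=> [_ md] od v vn v0 Av i0; rewrite lt_neqAle vn andbT.
apply/negP => /eqP vi0.
pose S := [set i | v i 0 != 0].
have sv : supp v S by move=> i; rewrite inE negbK => /eqP.
have i0S : i0 \notin S by rewrite inE negbK -vi0.
have [i [j vij]] := nz_entry _ v0; rewrite (ord1 j) in vij.
have iS : i \in S by rewrite inE.
have cS : (#|S| < n)%N.
  have h := cardsC S; rewrite card_ord in h; rewrite -[X in (_ < X)%N]h.
  by rewrite -[X in (X < _)%N]addn0 ltn_add2l card_gt0; apply/set0Pn; exists i0; rewrite inE.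
have c1 : (0 < #|S|)%N by rewrite card_gt0; apply/set0Pn; exists i.
case: (leqP 2 #|S|) => c2.
  apply: (md S c2 cS); apply: (sub_degen _ _ v) => // k _.
  by rewrite Av mxE.
have /cards1P [k Sk] : #|S| == 1%N by rewrite eqn_leq -ltnS c2 c1.
have ik : i = k by apply/set1P; rewrite -Sk.
subst k.
have i0i : i0 != i by apply/eqP => e; move: i0S; rewrite e iS.
have := congr1 (fun M : 'cV[R]_n => M i0 0) Av; rewrite !mxE (bigD1 i) //= big1 ?addr0.
  by move/eqP; rewrite mulf_eq0 (negbTE (od _ _ i0i)) (negbTE vij).
move=> k ki; rewrite (sv k) ?mulr0 // Sk inE //.
Qed.

Lemma part1 {R : realType} {n : nat} (A : 'M[R]_n) :
  minimally_degenerate A -> offdiag A ->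
  exists c : 'cV[R]_n, (forall i, 0 < c i 0) /\ enorm c = 1 /\
     (forall v : 'cV[R]_n, A *m v = 0 <-> exists t : R, v = t *: c).
Proof.
move=> md od; have [[v0 [v00 [v0n Av0]]] _] := md.
have vp := KL _ md od v0 v0n v00 Av0.
have e0 := enorm_gt0 _ v00.
exists ((enorm v0)^-1 *: v0); split; last split.
- by move=> i; rewrite mxE mulr_gt0 // invr_gt0.
- by rewrite enormZ ger0_norm ?invr_ge0 ?ltW // mulVf // gt_eqF.
have Ac : A *m ((enorm v0)^-1 *: v0) = 0 by rewrite -scalemxAr Av0 scaler0.
set c := (enorm v0)^-1 *: v0 in Ac *.
have cp : forall i, 0 < c i 0 by move=> i; rewrite mxE mulr_gt0 // invr_gt0.
clearbody c.
move=> w; split; last by move=> [t ->]; rewrite -scalemxAr Ac scaler0.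
move=> Aw.
have [i1 _] := nz_entry _ v00.
case: (@arg_minP _ _ _ i1 predT (fun j => w j 0 / c j 0) erefl) => j0 _ Hmin.
exists (w j0 0 / c j0 0); apply/eqP; rewrite -subr_eq0; apply/eqP.
apply: contrapT => /eqP w'0.
have := KL _ md od _ _ w'0 _ j0.
rewrite !mxE -mulrA mulVf ?gt_eqF // mulr1 subrr ltxx => H.
suff : false by []. apply: H.
- move=> j; rewrite !mxE subr_ge0 -ler_pdivlMr //; exact: Hmin.
- by rewrite mulmxBr Aw -scalemxAr Ac scaler0 subrr.
Qed.

Lemma rank1 {R : realType} {n : nat} (A : 'M[R]_n) (c : 'cV[R]_n) :
  c != 0 -> A *m c = 0 -> (forall v, A *m v = 0 -> exists t : R, v = t *: c) ->
  \rank (kermx A^T) = 1%N.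
Proof.
move=> c0 Ac Hk.
have -> : \rank (kermx A^T) = \rank c^T.
  apply: eqmx_rank; apply/andP; split.
    apply/row_subP => i.
    have : (row i (kermx A^T) <= kermx A^T)%MS by exact: row_sub.
    move/sub_kermxP => h.
    have [t ht] : exists t : R, (row i (kermx A^T))^T = t *: c.
      by apply: Hk; rewrite -[A in A *m _]trmxK -trmx_mul h trmx0.
    have -> : row i (kermx A^T) = t *: c^T by rewrite -[LHS]trmxK ht linearZ.
    exact/scalemx_sub/submx_refl.
  by apply/sub_kermxP; rewrite -trmx_mul Ac trmx0.
by rewrite rank_rV trmx_eq0 c0.
Qed.


Lemma pos_lb {R : realType} {n : nat} (F : 'I_n -> R) :
  (forall i, 0 < F i) -> exists m0, 0 < m0 /\ forall i, m0 <= F i.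
Proof.
case: n F => [|n] F Fp; first by exists 1; split => // -[].
case: (@arg_minP _ _ _ ord0 predT F erefl) => j _ H.
by exists (F j); split => // i; apply: H.
Qed.

Lemma sum_sq_diff {R : realType} {n : nat} (u e : 'cV[R]_n) :
  \sum_i (u i 0 - e i 0) ^+ 2 =
  \sum_i u i 0 ^+ 2 - 2 * \sum_i u i 0 * e i 0 + \sum_i e i 0 ^+ 2.
Proof.
rewrite mulr_sumr -sumrB -big_split /=; apply: eq_bigr => i _.
rewrite sqrrB; ring.
Qed.

Lemma abs_sum_prod {R : realType} {n : nat} (u e : 'cV[R]_n) :
  (forall i, `|u i 0| <= 1) -> `|\sum_i u i 0 * e i 0| <= n1 e.
Proof.
move=> hu; apply: (le_trans (ler_norm_sum _ _ _)); apply: ler_sum => i _.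
by rewrite normrM; apply: ler_piMl.
Qed.

Lemma part2core {R : realType} {n : nat} (A : 'M[R]_n) (c : 'cV[R]_n) :
  (forall i, 0 < c i 0) -> enorm c = 1 ->
  (forall v : 'cV[R]_n, A *m v = 0 <-> exists t : R, v = t *: c) ->
  exists C1 C2 : R, 0 < C1 /\ 0 < C2 /\
    forall u : 'cV[R]_n, nneg u -> enorm u = 1 ->
      C1 * enorm (A *m u) <= enorm (u - c) /\ enorm (u - c) <= C2 * enorm (A *m u).
Proof.
move=> cp c1 Hk.
have [m0 [m00 Hm0]] := pos_lb _ cp.
have [Cd [Cd0 HCd]] := dist_ker A.
set K := Kmx A; set nR := (n%:R : R).
have K0 : 0 <= K by exact: Kmx_ge0.
have nR0 : 0 <= nR by rewrite /nR ler0n.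
set B := 1 + nR * (2 + Cd * K * nR) + 2 * nR / m0.
have B0 : 0 <= B.
  rewrite /B; have : 0 <= Cd * K * nR by rewrite !mulr_ge0.
  have : 0 <= 2 * nR / m0 by rewrite !mulr_ge0 // invr_ge0 ltW.
  nra.
exists ((K * nR + 1)^-1), (B * Cd * nR + 1).
split; first by rewrite invr_gt0 ltr_pwDr // mulr_ge0.
split; first by rewrite ltr_pwDr // !mulr_ge0.
move=> u un u1.
have Ac : A *m c = 0 by apply/Hk; exists 1; rewrite scale1r.
have cabs : forall i, `|c i 0| <= 1 by move=> i; rewrite -c1 abs_le_enorm.
have uabs : forall i, `|u i 0| <= 1 by move=> i; rewrite -u1 abs_le_enorm.
have n1u : n1 u <= nR by rewrite -[X in _ <= X]mulr1 -u1 n1_le_enorm.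
have n1c : n1 c <= nR by rewrite -[X in _ <= X]mulr1 -c1 n1_le_enorm.
split.
  rewrite mulrC ler_pdivrMr ?ltr_pwDr ?mulr_ge0 //.
  have -> : A *m u = A *m (u - c) by rewrite mulmxBr Ac subr0.
  apply: (le_trans (enorm_le_n1 _)); apply: (le_trans (n1_mul _ _)).
  have := n1_le_enorm (u - c); have := enorm_ge0 (u - c); have := n1_ge0 (u - c).
  move=> h0 h1 h2; rewrite -/K -/nR.
  have : K * n1 (u - c) <= K * (nR * enorm (u - c)) by apply: ler_wpM2l.
  nra.
have [k [Ak hk]] := HCd u.
have [t kt] : exists t, k = t *: c by apply/Hk.
set e := u - k in hk.
set eps := n1 e in hk.
have eps0 : 0 <= eps by exact: n1_ge0.
have eps1 : eps <= Cd * nR * enorm (A *m u).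
  apply: (le_trans hk); rewrite -mulrA; apply: ler_wpM2l => //; exact: n1_le_enorm.
have eps2 : eps <= Cd * K * nR.
  apply: (le_trans hk); rewrite -mulrA; apply: ler_wpM2l => //.
  apply: (le_trans (n1_mul _ _)); apply: ler_wpM2l => //.
have eAu : 0 <= enorm (A *m u) by exact: enorm_ge0.
suff : enorm (u - c) <= B * eps.
  move=> h; apply: (le_trans h).
  have : B * eps <= B * (Cd * nR * enorm (A *m u)) by apply: ler_wpM2l.
  have : 0 <= B * Cd * nR * enorm (A *m u) by rewrite !mulr_ge0.
  move=> h3 h4; apply: (le_trans h4); nra.
have ue : forall i, u i 0 = t * c i 0 + e i 0.
  by move=> i; rewrite /e kt !mxE; ring.
set a := \sum_i u i 0 * e i 0.
set b := \sum_i e i 0 ^+ 2.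
have ha : `|a| <= eps by apply: abs_sum_prod.
have hb0 : 0 <= b by rewrite sumr_ge0 // => i _; rewrite sqr_ge0.
have hb : b <= eps ^+ 2.
  rewrite /b -enorm_sq ler_pXn2r // ?nnegrE ?enorm_ge0 //.
  exact: enorm_le_n1.
have cs : \sum_i c i 0 ^+ 2 = 1 by rewrite -enorm_sq c1 expr1n.
have us : \sum_i u i 0 ^+ 2 = 1 by rewrite -enorm_sq u1 expr1n.
have ht2 : t ^+ 2 = 1 - 2 * a + b.
  have h := sum_sq_diff u e; rewrite us in h; rewrite /a /b -h.
  rewrite -[t ^+ 2]mulr1 -cs mulr_sumr; apply: eq_bigr => i _.
  by rewrite ue; ring.
have hd : t = \sum_i c i 0 * u i 0 - \sum_i c i 0 * e i 0.
  rewrite -sumrB -[t]mulr1 -cs mulr_sumr; apply: eq_bigr => i _.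
  by rewrite ue; ring.
have hf : `|\sum_i c i 0 * e i 0| <= eps by apply: abs_sum_prod.
have hcu : m0 <= \sum_i c i 0 * u i 0.
  apply: (@le_trans _ _ (m0 * \sum_i u i 0)).
    rewrite -[X in X <= _]mulr1; apply: ler_wpM2l; first exact: ltW.
    rewrite -n1_nneg // -u1; exact: enorm_le_n1.
  rewrite mulr_sumr; apply: ler_sum => i _; apply: ler_wpM2r => //.
have uc : u - c = e + (t - 1) *: c by rewrite /e kt; apply/matrixP => i j; rewrite !mxE; ring.
apply: (le_trans (enorm_le_n1 _)).
case: (leP 0 t) => t0.
  rewrite uc; apply: (le_trans (n1D _ _)); rewrite n1Z -/eps.
  have ht1 : `|t - 1| <= 2 * eps + eps ^+ 2.
    have ha' := ha; rewrite ler_norml in ha'; case/andP: ha' => ha1 ha2.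
    case: (leP 1 t) => h.
      rewrite ger0_norm ?subr_ge0 //; rewrite expr2 in ht2 hb; nra.
    rewrite ler0_norm ?subr_le0 ?ltW //; rewrite expr2 in ht2 hb; nra.
  have : `|t - 1| * n1 c <= (2 * eps + eps ^+ 2) * nR.
    by apply: ler_pM => //; exact: n1_ge0.
  have : eps ^+ 2 <= Cd * K * nR * eps by rewrite expr2 ler_wpM2r.
  have hnR : 0 <= nR * eps by rewrite mulr_ge0.
  rewrite /B; move=> h1 h2.
  have : 2 * nR / m0 * eps >= 0 by rewrite !mulr_ge0 // invr_ge0 ltW.
  nra.
have hm : m0 < eps.
  move: hd hf; rewrite ler_norml; lra.
apply: (le_trans (n1B _ _)).
have : 2 * nR <= 2 * nR / m0 * eps.
  have q : 1 <= eps / m0 by rewrite ler_pdivlMr // mul1r ltW.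
  have q2 : 0 <= 2 * nR by rewrite mulr_ge0.
  rewrite -mulrA mulrCA -mulrA; nra.
have : 0 <= nR * (2 + Cd * K * nR) * eps by rewrite !mulr_ge0 // addr_ge0 // !mulr_ge0.
rewrite /B; nra.
Qed.


Lemma cnt_enum (n : nat) (P : pred 'I_n) : count P (enum 'I_n) = #|[set i | P i]|.
Proof.
rewrite cardsE cardE /enum_mem size_filter /= count_filter.
by apply: eq_count => x /=; rewrite andbT.
Qed.

Lemma lmax_ge {R : realType} {n : nat} (l : 'cV[R]_n) i : l i 0 <= lmax l.
Proof. by rewrite /lmax (bigD1 i) //= le_max lexx. Qed.

Lemma lmax_att {R : realType} {n : nat} (l : 'cV[R]_n) :
  lmax l = 0 \/ exists i, lmax l = l i 0.
Proof.
rewrite /lmax; apply: (big_ind (fun x => x = 0 \/ exists i, x = l i 0)).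
- by left.
- move=> x y hx hy; rewrite maxEle; case: ifP => _; [exact: hy | exact: hx].
- by move=> i _; right; exists i.
Qed.

Lemma lmax2_card {R : realType} {n : nat} (l : 'cV[R]_n) :
  0 < lmax2 l -> (2 <= #|[set i | (lmax2 l <= l i 0)%R]|)%N.
Proof.
rewrite /lmax2.
set s := [seq l i 0 | i <- enum 'I_n].
set le := (fun x y : R => y <= x).
have tot : total le by move=> x y; rewrite /le orbC le_total.
have hs := sort_sorted tot s.
have hp : perm_eq (sort le s) s by rewrite perm_sort perm_refl.
rewrite -cnt_enum -(count_map (fun i => l i 0) (fun x => nth 0 (sort le s) 1 <= x)) -/s.
rewrite -(permP hp).
move: hs; case: (sort le s) => [|x0 [|x1 r]] //=; rewrite ?ltxx //.
move=> /andP [hx _] _; rewrite /le in hx; rewrite lexx hx.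
by rewrite !add1n.
Qed.


Lemma le_sumT {R : realType} {T : finType} (F : T -> R) i :
  (forall j, 0 <= F j) -> F i <= \sum_j F j.
Proof.
move=> F0; rewrite (bigD1 i) //= lerDl sumr_ge0 // => j _; exact: F0.
Qed.

Lemma card_lt_notin {n : nat} (L : {set 'I_n}) i : i \notin L -> (#|L| < n)%N.
Proof.
move=> iL; have h := cardsC L; rewrite card_ord in h; rewrite -[X in (_ < X)%N]h.
by rewrite -[X in (X < _)%N]addn0 ltn_add2l card_gt0; apply/set0Pn; exists i; rewrite inE.
Qed.

Lemma unif_gordan {R : realType} {n : nat} (A : 'M[R]_n) :
  (forall S : {set 'I_n}, (2 <= #|S|)%N -> (#|S| < n)%N -> ~ degenerate_mx (subcfg_mx A S)) ->
  exists Cg, 0 <= Cg /\ forall L : {set 'I_n}, (2 <= #|L|)%N -> (#|L| < n)%N ->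
    forall u, nneg u -> supp u L -> n1 u <= Cg * n1 (Pm L *m A *m u).
Proof.
move=> md.
have hex : forall L : {set 'I_n}, exists C, 0 <= C /\ ((2 <= #|L|)%N -> (#|L| < n)%N ->
    forall u, nneg u -> supp u L -> n1 u <= C * n1 (Pm L *m A *m u)).
  move=> L; case: (pselect ((2 <= #|L|)%N /\ (#|L| < n)%N)) => [[c2 cn]|nc]; last first.
    by exists 0; split => // c2 cn; exfalso; apply: nc.
  have hyp : forall w, nneg w -> supp w L -> Pm L *m A *m w = 0 -> w = 0.
    move=> w wn sw Mw; apply/eqP; apply: contrapT => /negP w0.
    apply: (md L c2 cn); apply: (sub_degen A L w) => // i iL.
    have := congr1 (fun M : 'cV[R]_n => M i 0) Mw.
    by rewrite -mulmxA Pm_mul !mxE iL.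
  have [C [C0 HC]] := gordan (Pm L *m A) #|L| L (leqnn _) hyp.
  by exists C; split => // _ _.
have [fC HfC] := choice hex.
exists (\sum_L fC L); split; first by rewrite sumr_ge0 // => L _; case: (HfC L).
move=> L c2 cn u un su; have [f0 Hf] := HfC L.
apply: (le_trans (Hf c2 cn u un su)); apply: ler_wpM2r; first exact: n1_ge0.
by apply: (le_sumT fC) => j; case: (HfC j).
Qed.


Lemma part3 {R : realType} {n : nat} (A : 'M[R]_n) (D : R) :
  1 <= D ->
  (forall S : {set 'I_n}, (2 <= #|S|)%N -> (#|S| < n)%N -> ~ degenerate_mx (subcfg_mx A S)) ->
  forall d1 : R, 0 < d1 ->
      exists C1 C2 : R, 0 < C1 /\ 0 < C2 /\
      forall lam : 'cV[R]_n, (forall i, 0 < lam i 0) ->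
        d1 * lmax lam <= lmax2 lam ->
        let S := \sum_(i < n) powR (lam i 0) (2 * D - 2) * (A *m vpow lam D) i 0 ^+ 2 in
        let T := powR (lmax lam) (2 * D - 2) * enorm (A *m vpow lam D) ^+ 2 in
        C1 * T <= S /\ S <= C2 * T.
Proof.
move=> D1 md d1 d10.
have [Cg [Cg0 HCg]] := unif_gordan A md.
set p := 2 * D - 2.
have p0 : 0 <= p by rewrite /p; lra.
have D0 : 0 <= D by lra.
set K := Kmx A; set nR := (n%:R : R).
have K0 : 0 <= K by exact: Kmx_ge0.
have nR0 : 0 <= nR by rewrite /nR ler0n.
set eta := Num.min (Num.min d1 1) ((2 * (Cg * K * nR + 1))^-1).
have hpos : 0 < 2 * (Cg * K * nR + 1).
  have : 0 <= Cg * K * nR by rewrite !mulr_ge0.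
  lra.
have eta0 : 0 < eta by rewrite /eta !lt_min d10 ltr01 invr_gt0 hpos.
have etad : eta <= d1 by rewrite /eta !ge_min lexx.
have eta1 : eta <= 1 by rewrite /eta !ge_min lexx orbT.
have etaC : Cg * K * nR * eta <= 1 / 2.
  have : eta <= (2 * (Cg * K * nR + 1))^-1 by rewrite /eta ge_min lexx orbT.
  rewrite -[X in _ <= X]div1r ler_pdivlMr // => h.
  have : 0 <= Cg * K * nR by rewrite !mulr_ge0.
  rewrite ler_pdivlMr; last by lra.
  nra.
set Q := 2 * Cg * K * nR * nR.
have Q1 : 0 < Q ^+ 2 + 1 by have := sqr_ge0 Q; lra.
exists (powR eta p / (Q ^+ 2 + 1)), 1.
split; first by rewrite divr_gt0 // powR_gt0.
split; first exact: ltr01.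
move=> lam lp hd S T.
case: (lmax_att lam) => [m0 | [imax him]].
  have S0 : S = 0.
    by rewrite /S big1 // => i _; exfalso; have := lmax_ge lam i; rewrite m0 leNgt lp.
  have T0 : T = 0.
    rewrite /T /enorm big1 ?sqrtr0 ?expr0n ?mulr0 // => i _.
    by exfalso; have := lmax_ge lam i; rewrite m0 leNgt lp.
  by rewrite S0 T0 !mulr0; split.
set m := lmax lam in hd him *.
have m0 : 0 < m by rewrite him.
set nu := vpow lam D.
set y := A *m nu.
set V := powR m D.
have V0 : 0 < V by exact: powR_gt0.
have nuE : forall i, nu i 0 = powR (lam i 0) D by move=> i; rewrite mxE.
have nun : nneg nu by move=> i; rewrite nuE powR_ge0.
have nuV : forall i, nu i 0 <= V.
  move=> i; rewrite nuE /V; apply: ge0_ler_powR => //; rewrite ?nnegrE; [exact: ltW | exact: ltW | rewrite /m; exact: lmax_ge].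
pose L := [set i | eta * m <= lam i 0].
have imL : imax \in L by rewrite inE -him ger_pMl.
have small : forall i, i \notin L -> nu i 0 <= eta * V.
  move=> i; rewrite inE -ltNge => hi.
  rewrite nuE; apply: (@le_trans _ _ (powR (eta * m) D)).
    by apply: ge0_ler_powR => //; rewrite ?nnegrE; [exact: ltW | rewrite mulr_ge0 // ltW | exact: ltW].
  rewrite powRM; [|exact: ltW|exact: ltW]; rewrite -/V; apply: ler_wpM2r; first exact: ltW.
  by apply: ge1r_powR; rewrite ?eta0 ?eta1.
have key : enorm y ^+ 2 <= (Q ^+ 2 + 1) * enorm (mskv L y) ^+ 2.
  case: (ltnP #|L| n) => cLn; last first.
    have -> : mskv L y = y.
      apply: mskv_id => i iL; exfalso; have := card_lt_notin L i iL.
      by rewrite ltnNge cLn.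
    by rewrite mulrDl mul1r lerDr mulr_ge0 ?sqr_ge0.
  have c2 : (2 <= #|L|)%N.
    have hl2 : 0 < lmax2 lam by apply: lt_le_trans hd; rewrite mulr_gt0.
    apply: (leq_trans (lmax2_card lam hl2)); apply: subset_leq_card.
    apply/subsetP => i; rewrite !inE => h; apply: le_trans h.
    by apply: (le_trans _ hd); apply: ler_wpM2r => //; exact: ltW.
  have h1 : V <= n1 (mskv L nu).
    apply: (@le_trans _ _ `|mskv L nu imax 0|); last first.
      exact: (le_sum_nonneg (fun j => `|mskv L nu j 0|)).
    by rewrite mxE imL nuE -him ger0_norm ?powR_ge0.
  have mLn : nneg (mskv L nu) by move=> i; rewrite mxE; case: ifP => _ //.
  have h2 := HCg L c2 cLn (mskv L nu) mLn (mskv_supp L nu).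
  have h3 : Pm L *m A *m mskv L nu = mskv L y - mskv L (A *m (nu - mskv L nu)).
    by rewrite -mskvB -mulmxA Pm_mul mulmxBr /y opprB addrC subrK.
  have h4 : n1 (Pm L *m A *m mskv L nu) <= n1 (mskv L y) + K * n1 (nu - mskv L nu).
    rewrite h3; apply: (le_trans (n1B _ _)); rewrite lerD2l.
    apply: (le_trans (n1_mskv _ _)); exact: n1_mul.
  have h5 : n1 (nu - mskv L nu) <= nR * (eta * V).
    apply: (@le_trans _ _ (\sum_(i < n) eta * V)); last first.
      by rewrite sumr_const card_ord mulr_natl.
    apply: ler_sum => i _; rewrite !mxE; case: ifP => iL.
      by rewrite subrr normr0 mulr_ge0 ?ltW.
    rewrite subr0 ger0_norm ?nun // -nuE; have := small i; rewrite iL; exact.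
  have h6 : V <= 2 * Cg * n1 (mskv L y).
    have hn : 0 <= n1 (mskv L y) by exact: n1_ge0.
    have hn2 : 0 <= n1 (nu - mskv L nu) by exact: n1_ge0.
    have : Cg * (K * n1 (nu - mskv L nu)) <= Cg * (K * (nR * (eta * V))).
      by apply: ler_wpM2l => //; apply: ler_wpM2l.
    have : Cg * n1 (Pm L *m A *m mskv L nu) <= Cg * (n1 (mskv L y) + K * n1 (nu - mskv L nu)).
      by apply: ler_wpM2l.
    have : Cg * K * nR * eta * V <= 1 / 2 * V by apply: ler_wpM2r => //; exact: ltW.
    move: h1 h2; lra.
  have h7 : n1 (mskv L y) <= nR * enorm (mskv L y) by exact: n1_le_enorm.
  have h8 : enorm y <= K * (nR * V).
    apply: (le_trans (enorm_le_n1 _)); apply: (le_trans (n1_mul _ _)).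
    apply: ler_wpM2l => //; apply: (@le_trans _ _ (\sum_(i < n) V)).
      by apply: ler_sum => i _; rewrite ger0_norm ?nun.
    by rewrite sumr_const card_ord mulr_natl.
  have eL0 : 0 <= enorm (mskv L y) by exact: enorm_ge0.
  have ey0 : 0 <= enorm y by exact: enorm_ge0.
  have h9 : enorm y <= Q * enorm (mskv L y).
    have : K * nR * V <= K * nR * (2 * Cg * n1 (mskv L y)).
      by apply: ler_wpM2l => //; rewrite mulr_ge0.
    have : K * nR * (2 * Cg) * n1 (mskv L y) <= K * nR * (2 * Cg) * (nR * enorm (mskv L y)).
      by apply: ler_wpM2l => //; rewrite !mulr_ge0.
    rewrite /Q; move: h8; nra.
  have Q0 : 0 <= Q by rewrite /Q !mulr_ge0.
  have : enorm y ^+ 2 <= (Q * enorm (mskv L y)) ^+ 2.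
    by rewrite ler_pXn2r // ?nnegrE // mulr_ge0.
  rewrite exprMn => h; apply: (le_trans h); apply: ler_wpM2r; first exact: sqr_ge0.
  by rewrite lerDl.
have hS : powR eta p * powR m p * enorm (mskv L y) ^+ 2 <= S.
  rewrite enorm_sq mulr_sumr /S -/nu -/y -/p; apply: ler_sum => i _.
  rewrite mxE; case: ifP => iL.
    rewrite -powRM; [|exact: ltW|exact: ltW]; apply: ler_wpM2r; first exact: sqr_ge0.
    apply: ge0_ler_powR => //; rewrite ?nnegrE; [rewrite mulr_ge0 // ltW // | exact: ltW |].
    by move: iL; rewrite inE.
  by rewrite expr0n /= mulr0 mulr_ge0 ?powR_ge0 ?sqr_ge0.
have hT : T <= powR m p * ((Q ^+ 2 + 1) * enorm (mskv L y) ^+ 2).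
  by rewrite /T -/nu -/y -/p -/m; apply: ler_wpM2l => //; exact: powR_ge0.
split.
  apply: (@le_trans _ _ (powR eta p / (Q ^+ 2 + 1) * (powR m p * ((Q ^+ 2 + 1) * enorm (mskv L y) ^+ 2)))).
    by apply: ler_wpM2l => //; rewrite divr_ge0 ?powR_ge0 // ltW.
  apply: le_trans hS; rewrite le_eqVlt; apply/orP; left; apply/eqP; field.
  by rewrite gt_eqF.
rewrite mul1r /S /T -/nu -/y -/p -/m enorm_sq mulr_sumr; apply: ler_sum => i _.
apply: ler_wpM2r; first exact: sqr_ge0.
apply: ge0_ler_powR => //; rewrite ?nnegrE; [exact: ltW | exact: ltW |].
rewrite /m; exact: lmax_ge.
Qed.


Lemma Astar_od (R : realType) (N J : nat) (k0 kinf : R)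
  (iota : 'I_J -> R) (z : 'I_J -> 'rV[R]_N) :
  0 < k0 -> 0 < kinf -> (forall i, iota i = 1 \/ iota i = -1) -> injective z ->
  offdiag (Astar k0 kinf iota z).
Proof.
move=> k00 kinf0 hi zi i j ij; rewrite mxE (negbTE ij).
have io : forall k, iota k != 0.
  by move=> k; case: (hi k) => ->; rewrite ?oppr_eq0 oner_eq0.
have zz : z i - z j != 0.
  by rewrite subr_eq0; apply/eqP => /zi e; move/eqP: ij; apply.
have e0 : 0 < enorm (z i - z j) by exact: enorm_gt0.
rewrite !mulf_neq0 ?io //; [by rewrite gt_eqF | by rewrite gt_eqF |].
by rewrite invr_eq0 expf_neq0 // gt_eqF.
Qed.



Theorem lemma4p5 (R : realType) (N J : nat) (k0 kinf : R)
  (iota : 'I_J -> R) (z : 'I_J -> 'rV[R]_N) :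
  (7 <= N)%N -> 0 < k0 -> 0 < kinf ->
  (forall i, iota i = 1 \/ iota i = -1) ->
  injective z ->
  minimally_degenerate (Astar k0 kinf iota z) ->
  let A := Astar k0 kinf iota z in
  let D := Dexp R N in
  (\rank (kermx A^T) = 1)%N /\
  exists c : 'cV[R]_J,
    ((forall i, 0 < c i 0) /\ enorm c = 1 /\
     (forall v : 'cV[R]_J, A *m v = 0 <-> exists t : R, v = t *: c)) /\
    (forall c' : 'cV[R]_J,
       (forall i, 0 < c' i 0) -> enorm c' = 1 ->
       (forall v : 'cV[R]_J, A *m v = 0 <-> exists t : R, v = t *: c') ->
       c' = c) /\
    (exists C1 C2 : R, 0 < C1 /\ 0 < C2 /\
      forall l : 'cV[R]_J, l != 0 -> (forall i, 0 <= l i 0) ->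
        C1 * (enorm (A *m l) / enorm l) <= enorm ((enorm l)^-1 *: l - c) /\
        enorm ((enorm l)^-1 *: l - c) <= C2 * (enorm (A *m l) / enorm l)) /\
    (forall d1 : R, 0 < d1 ->
      exists C1 C2 : R, 0 < C1 /\ 0 < C2 /\
      forall lam : 'cV[R]_J, (forall i, 0 < lam i 0) ->
        d1 * lmax lam <= lmax2 lam ->
        let S := \sum_(i < J) powR (lam i 0) (2 * D - 2) * (A *m vpow lam D) i 0 ^+ 2 in
        let T := powR (lmax lam) (2 * D - 2) * enorm (A *m vpow lam D) ^+ 2 in
        C1 * T <= S /\ S <= C2 * T).
Proof.
move=> N7 k00 kinf0 hi zi md A D.
have od : offdiag A by exact: Astar_od.
have [c [cp [c1 Hk]]] := part1 A md od.
have c0 : c != 0.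
  apply/eqP => e; move: c1.
  have -> : enorm c = 0 by rewrite e -(scale0r (0 : 'cV[R]_J)) enormZ normr0 mul0r.
  by move/eqP; rewrite eq_sym oner_eq0.
have Ac : A *m c = 0 by apply/Hk; exists 1; rewrite scale1r.
split.
  by apply: (rank1 A c c0 Ac) => v /Hk.
exists c; split; first by [].
split.
  move=> c' cp' c1' Hk'.
  have Ac' : A *m c' = 0 by apply/Hk'; exists 1; rewrite scale1r.
  have [t ht] := (proj1 (Hk c') Ac').
  have [i0 [j0 _]] := nz_entry _ c0.
  have t0 : 0 < t.
    have := cp' i0; rewrite ht mxE => h.
    by rewrite -(pmulr_lgt0 _ (cp i0)).
  have : enorm c' = t by rewrite ht enormZ c1 mulr1 gtr0_norm.
  by rewrite c1' => e; rewrite ht -e scale1r.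
split.
  have [C1 [C2 [C10 [C20 HC]]]] := part2core A c cp c1 Hk.
  exists C1, C2; split => //; split => // l l0 ln.
  have r0 := enorm_gt0 _ l0.
  set u := (enorm l)^-1 *: l.
  have un : nneg u by move=> i; rewrite mxE mulr_ge0 // invr_ge0 ltW.
  have u1 : enorm u = 1 by rewrite enormZ ger0_norm ?invr_ge0 ?ltW // mulVf // gt_eqF.
  have -> : enorm (A *m l) / enorm l = enorm (A *m u).
    by rewrite /u -scalemxAr enormZ ger0_norm ?invr_ge0 ?ltW // mulrC.
  exact: HC.
apply: part3; last exact: md.2.
rewrite /D /Dexp ler_pdivlMr // mul1r lerBrDr.
have : (7%:R : R) <= N%:R by rewrite ler_nat.
apply: le_trans; rewrite -natrD ler_nat //.
Qed.
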